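(* Let $(\alpha_n)_{n\ge0}$ be complex numbers with $|\alpha_n|<1$ and let $\mu_{n,r,s}$ be as in the context. For all nonnegative integers $n,r,s$, \[ \mu_{n,r,s}=\sum_{p\in\mathfrak{L}_{n,r,s}}\mathrm{wt}_L(p). \]
   Context: For a polynomial $f(z)=\sum_{k=0}^n a_kz^k$ of degree $n$, write $\overline{f}(z)=\sum_k\overline{a_k}z^k$ and $f^*(z)=z^n\overline{f}(1/z)$. Define monic $\Phi_n$ by $\Phi_0=1$, $\Phi_{n+1}(z)=z\Phi_n(z)-\overline{\alpha_n}\Phi_n^*(z)$. Let $\mathcal{L}$ be the unique linear functional on Laurent polynomials with $\mathcal{L}(1)=1$ and $\mathcal{L}(\Phi_m(z)\overline{\Phi_n}(1/z))=0$ for $m\neq n$; set $\langle f,g\rangle=\mathcal{L}(f(z)\overline{g}(1/z))$ and $\mu_{n,r,s}=\langle\Phi_s(z),z^n\Phi_r(z)\rangle/\langle\Phi_s,\Phi_s\rangle$. Set $\alpha_{-1}=-1$. A Łukasiewicz path is a finite sequence of lattice points in $\mathbb{Z}\times\mathbb{Z}_{\ge0}$ whose steps are of the form $(1,k)$ with $k\le 1$ integer; $\mathfrak{L}_{n,r,s}$ is the set of such paths from $(0,r)$ to $(n,s)$. The weight $\mathrm{wt}_L(p)$ is the product of the weights of the steps, where an up-step $(a,b)\to(a+1,b+1)$ has weight $1$ and a step $(a,b)\to(a+1,b-k)$, $k=0,1,\dots,b$, has weight $-\alpha_b\overline{\alpha_{b-k-1}}\prod_{j=b-k}^{b-1}(1-|\alpha_j|^2)$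 (the empty product being $1$). *)

(* Defs.v *)
From mathcomp Require Import all_boot all_algebra complex.
From mathcomp Require Import reals.
Set Implicit Arguments. Unset Strict Implicit. Unset Printing Implicit Defensive.
Import GRing.Theory Num.Theory.
Local Open Scope ring_scope.

Section OPUC.
Variable R : realType.
Local Notation C := (R[i]).
Variable alpha : nat -> C.

(* f^*(z) = z^n \bar f(1/z) for a polynomial f of degree n *)
Definition rev_star (n : nat) (f : {poly C}) : {poly C} :=
  \poly_(k < n.+1) (f`_(n - k))^*.

Fixpoint Phi (n : nat) : {poly C} :=
  match n with
  | 0 => 1
  | m.+1 => 'X * Phi m - (alpha m)^* *: rev_star m (Phi m)
  end.

(* A linear functional L on Laurent polynomials is given by its moments
   c k = L(z^k), k : int.  ip c f g = L(f(z) * \bar g(1/z)) = <f,g>. *)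
Definition ip (c : int -> C) (f g : {poly C}) : C :=
  \sum_(i < size f) \sum_(j < size g)
     f`_i * (g`_j)^* * c (i%:Z - j%:Z).

Definition mu (c : int -> C) (n r s : nat) : C :=
  ip c (Phi s) ('X^n * Phi r) / ip c (Phi s) (Phi s).

(* conj(alpha_j) with the convention alpha_{-1} = -1; the argument is j+1 *)
Definition conj_alpha_shift (j1 : nat) : C :=
  if j1 is j.+1 then (alpha j)^* else -1.

Definition step_wt (b b' : nat) : C :=
  if b' == b.+1 then 1
  else - alpha b * conj_alpha_shift b'
       * \prod_(b' <= j < b) (1 - `|alpha j| ^+ 2).

(* Lukasiewicz paths from (0,r) to (n,s), as height functions
   h : {0..n} -> {0..r+n}  (every such path has heights <= r+n). *)
Definition is_luk (n r s : nat) (h : {ffun 'I_n.+1 -> 'I_(r + n).+1}) : bool :=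
  [&& (h ord0 : nat) == r, (h ord_max : nat) == s &
      [forall i : 'I_n, ((h (lift ord0 i) : nat) <= (h (widen_ord (leqnSn n) i)).+1)%N]].

Definition wt_L (n r : nat) (h : {ffun 'I_n.+1 -> 'I_(r + n).+1}) : C :=
  \prod_(i < n) step_wt (h (widen_ord (leqnSn n) i)) (h (lift ord0 i)).

End OPUC.

(* Main.v *)
Require Import Defs.
From mathcomp Require Import all_boot all_algebra complex.
From mathcomp Require Import reals.
From mathcomp Require Import ring zify.
Set Implicit Arguments. Unset Strict Implicit. Unset Printing Implicit Defensive.
Import GRing.Theory Num.Theory.
Local Open Scope ring_scope.

Section IP.
Variable R : realType.
Local Notation C := (R[i]).
Variable c : int -> C.

Definition ipN (N : nat) (f g : {poly C}) : C :=
  \sum_(i < N) \sum_(j < N) f`_i * (g`_j)^* * c (i%:Z - j%:Z).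

Lemma ip_N N (f g : {poly C}) : (size f <= N)%N -> (size g <= N)%N -> ip c f g = ipN N f g.
Proof.
move=> hf hg; rewrite /ip /ipN.
rewrite (big_ord_widen N (fun i : nat => \sum_(j < size g) f`_i * (g`_j)^* * c (i%:Z - j%:Z))) //.
rewrite big_mkcond; apply: eq_bigr => i _.
case: ifP => hi.
  rewrite (big_ord_widen N (fun j : nat => f`_i * (g`_j)^* * c (i%:Z - j%:Z))) //.
  rewrite big_mkcond; apply: eq_bigr => j _.
  case: ifP => // hj; rewrite [g`_j]nth_default ?conjC0 ?mulr0 ?mul0r //.
  by rewrite leqNgt hj.
rewrite big1 // => j _.
rewrite [f`_i]nth_default ?mul0r //.
by rewrite leqNgt hi.
Qed.

Lemma ipNDl N (f g h : {poly C}) : ipN N (f + g) h = ipN N f h + ipN N g h.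
Proof.
rewrite /ipN -big_split; apply: eq_bigr => i _; rewrite -big_split.
by apply: eq_bigr => j _; rewrite coefD !mulrDl.
Qed.

Lemma ipNDr N (f g h : {poly C}) : ipN N f (g + h) = ipN N f g + ipN N f h.
Proof.
rewrite /ipN -big_split; apply: eq_bigr => i _; rewrite -big_split.
by apply: eq_bigr => j _; rewrite coefD rmorphD /= !mulrDr !mulrDl.
Qed.

Lemma ipNZl N a (f h : {poly C}) : ipN N (a *: f) h = a * ipN N f h.
Proof.
rewrite /ipN mulr_sumr; apply: eq_bigr => i _; rewrite mulr_sumr.
by apply: eq_bigr => j _; rewrite coefZ !mulrA.
Qed.

Lemma ipNZr N a (f h : {poly C}) : ipN N f (a *: h) = a^* * ipN N f h.
Proof.
rewrite /ipN mulr_sumr; apply: eq_bigr => i _; rewrite mulr_sumr.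
apply: eq_bigr => j _; rewrite coefZ rmorphM /=; ring.
Qed.

Lemma sizeD_le (f g : {poly C}) N : (size f <= N)%N -> (size g <= N)%N -> (size (f + g)%R <= N)%N.
Proof. move=> hf hg; apply: leq_trans (size_polyD _ _) _; by rewrite geq_max hf hg. Qed.

Lemma sizeZ_le (f : {poly C}) a N : (size f <= N)%N -> (size (a *: f) <= N)%N.
Proof. move=> hf; exact: leq_trans (size_scale_leq _ _) hf. Qed.

Lemma ipDl (f g h : {poly C}) : ip c (f + g) h = ip c f h + ip c g h.
Proof.
set N := maxn (size f) (maxn (size g) (size h)).
have hf : (size f <= N)%N by rewrite leq_max leqnn.
have hg : (size g <= N)%N by rewrite !leq_max leqnn orbT.
have hh : (size h <= N)%N by rewrite !leq_max leqnn !orbT.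
by rewrite !(ip_N (N:=N)) ?ipNDl // sizeD_le.
Qed.

Lemma ipDr (f g h : {poly C}) : ip c f (g + h) = ip c f g + ip c f h.
Proof.
set N := maxn (size f) (maxn (size g) (size h)).
have hf : (size f <= N)%N by rewrite leq_max leqnn.
have hg : (size g <= N)%N by rewrite !leq_max leqnn orbT.
have hh : (size h <= N)%N by rewrite !leq_max leqnn !orbT.
by rewrite !(ip_N (N:=N)) ?ipNDr // sizeD_le.
Qed.

Lemma ipZl a (f h : {poly C}) : ip c (a *: f) h = a * ip c f h.
Proof.
set N := maxn (size f) (size h).
have hf : (size f <= N)%N by rewrite leq_max leqnn.
have hh : (size h <= N)%N by rewrite !leq_max leqnn !orbT.
by rewrite !(ip_N (N:=N)) ?ipNZl // sizeZ_le.
Qed.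

Lemma ipZr a (f h : {poly C}) : ip c f (a *: h) = a^* * ip c f h.
Proof.
set N := maxn (size f) (size h).
have hf : (size f <= N)%N by rewrite leq_max leqnn.
have hh : (size h <= N)%N by rewrite !leq_max leqnn !orbT.
by rewrite !(ip_N (N:=N)) ?ipNZr // sizeZ_le.
Qed.

Lemma ip0l (h : {poly C}) : ip c 0 h = 0.
Proof. by rewrite /ip size_poly0 big_ord0. Qed.
Lemma ip0r (h : {poly C}) : ip c h 0 = 0.
Proof. by rewrite /ip size_poly0; apply: big1 => i _; rewrite big_ord0. Qed.

Lemma ipNl (f g h : {poly C}) : ip c (f - g) h = ip c f h - ip c g h.
Proof. by rewrite -scaleN1r ipDl ipZl mulN1r. Qed.
Lemma ipNr (f g h : {poly C}) : ip c f (g - h) = ip c f g - ip c f h.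
Proof. by rewrite -scaleN1r ipDr ipZr conjCN1 mulN1r. Qed.

Lemma ip_sumr I (r : seq I) (P : pred I) (f : {poly C}) (F : I -> {poly C}) :
  ip c f (\sum_(i <- r | P i) F i) = \sum_(i <- r | P i) ip c f (F i).
Proof. exact: (big_morph _ (ipDr f) (ip0r f)). Qed.
Lemma ip_suml I (r : seq I) (P : pred I) (f : {poly C}) (F : I -> {poly C}) :
  ip c (\sum_(i <- r | P i) F i) f = \sum_(i <- r | P i) ip c (F i) f.
Proof. exact: (big_morph _ (fun a b => ipDl a b f) (ip0l f)). Qed.

End IP.
Section Poly.
Variable R : realType.
Local Notation C := (R[i]).
Variable alpha : nat -> C.
Local Notation Phi := (Phi alpha).
Local Notation cas := (conj_alpha_shift alpha).

Lemma rsD n (f g : {poly C}) : rev_star n (f + g) = rev_star n f + rev_star n g.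
Proof. by apply/polyP => k; rewrite coefD !coef_poly; case: ifP; rewrite ?addr0 // coefD rmorphD. Qed.

Lemma rsZ n a (f : {poly C}) : rev_star n (a *: f) = a^* *: rev_star n f.
Proof. by apply/polyP => k; rewrite coefZ !coef_poly; case: ifP; rewrite ?mulr0 // coefZ rmorphM. Qed.

Lemma rsX n (f : {poly C}) : (size f <= n.+1)%N -> rev_star n.+1 ('X * f) = rev_star n f.
Proof.
move=> hf; apply/polyP => k; rewrite !coef_poly coefXM.
case: (ltngtP k n.+1) => hk.
- rewrite ltnS ltnW // ifF; last by apply/eqP; lia.
  by congr (_ ^* ); congr (f`_ _); lia.
- by rewrite (_ : (k < n.+2)%N = false) //; lia.
- by subst k; rewrite ltnSn subnn eqxx conjC0.
Qed.

Lemma rsrs n (f : {poly C}) : (size f <= n.+1)%N -> rev_star n.+1 (rev_star n f) = 'X * f.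
Proof.
move=> hf; apply/polyP => k; rewrite !coef_poly coefXM.
case: k => [|k] /=.
  by rewrite subn0 ltnn conjC0.
rewrite ltnS; case: (leqP k n) => hk.
  rewrite (_ : (k < n.+1)%N = true); last lia.
  rewrite (_ : (n.+1 - k.+1 < n.+1)%N = true); last lia.
  rewrite conjCK; congr (f`_ _); lia.
rewrite (_ : (k < n.+1)%N = false); last lia.
by rewrite nth_default //; exact: leq_trans hf hk.
Qed.

Lemma size_rs n (f : {poly C}) : (size (rev_star n f) <= n.+1)%N.
Proof. exact: size_poly. Qed.

Lemma size_XM (f : {poly C}) N : (size f <= N)%N -> (size ('X * f)%R <= N.+1)%N.
Proof.
move=> hf; apply: leq_trans (size_polyMleq _ _) _.
by rewrite size_polyX. 
Qed.

Lemma size_Phi n : (size (Phi n) <= n.+1)%N.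
Proof.
elim: n => [|n IH] /=; first by rewrite size_poly1.
rewrite -scaleNr; apply: sizeD_le; first exact: size_XM.
by apply: sizeZ_le; apply: leq_trans (size_rs _ _) _.
Qed.

Lemma PhiS n : Phi n.+1 = 'X * Phi n - (alpha n)^* *: rev_star n (Phi n).
Proof. by []. Qed.

Lemma Phistar_rec n :
  rev_star n.+1 (Phi n.+1) = rev_star n (Phi n) - alpha n *: ('X * Phi n).
Proof.
rewrite PhiS -scaleNr rsD rsZ rsX ?size_Phi // rsrs ?size_Phi //.
by rewrite rmorphN /= conjCK scaleNr.
Qed.

Definition beta n t := - (cas t)^* * \prod_(t <= j < n) (1 - `|alpha j| ^+ 2).

Lemma XPhi_rec n : 'X * Phi n = Phi n.+1 + (alpha n)^* *: rev_star n (Phi n).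
Proof. by rewrite PhiS subrK. Qed.

Lemma rs01 : rev_star 0 (1 : {poly C}) = 1.
Proof.
apply/polyP => k; rewrite coef_poly !coef1; case: k => [|k] //=.
by rewrite (conjC_nat _ 1).
Qed.

Lemma Phistar_exp n : rev_star n (Phi n) = \sum_(t < n.+1) beta n t *: Phi t.
Proof.
elim: n => [|n IH].
  rewrite big_ord1 /beta /= big_geq // mulr1 conjCN1 opprK scale1r.
  exact: rs01.
rewrite Phistar_rec XPhi_rec scalerDr scalerA -normCK.
rewrite big_ord_recr /= /beta big_geq // mulr1 /= conjCK.
have -> : \sum_(i < n.+1) (- (cas i)^* * \prod_(i <= j < n.+1) (1 - `|alpha j| ^+ 2)) *: Phi i
   = (1 - `|alpha n| ^+ 2) *: rev_star n (Phi n).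
  rewrite IH scaler_sumr; apply: eq_bigr => i _; rewrite scalerA /beta.
  rewrite big_nat_recr //=; first by congr (_ *: _); ring.
  by rewrite -ltnS.
by rewrite scalerBl scale1r scaleNr opprD addrA addrAC.
Qed.
Lemma conj_prod_norm (a b : nat) :
  (\prod_(a <= j < b) (1 - `|alpha j| ^+ 2))^* = \prod_(a <= j < b) (1 - `|alpha j| ^+ 2).
Proof.
rewrite rmorph_prod; apply: eq_bigr => j _.
by rewrite rmorphB rmorph1 rmorphXn /= conj_normC.
Qed.

Lemma XPhi_exp n : 'X * Phi n = \sum_(t < n.+2) (step_wt alpha n t)^* *: Phi t.
Proof.
rewrite XPhi_rec Phistar_exp [RHS]big_ord_recr addrC.
have -> : step_wt alpha n (@ord_max n.+1) = 1 by rewrite /step_wt eqxx.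
rewrite conjC1 scale1r; congr (_ + _).
rewrite scaler_sumr; apply: eq_bigr => t _; rewrite scalerA; congr (_ *: _).
rewrite /step_wt /= ifF; last by apply/negbTE; rewrite neq_ltn ltnS leq_ord.
rewrite /beta !rmorphM rmorphN /= conj_prod_norm; ring.
Qed.

Fixpoint W (n r s : nat) : C :=
  match n with
  | 0 => (r == s)%:R
  | n'.+1 => \sum_(t < r.+2) step_wt alpha r t * W n' t s
  end.

Lemma XnPhi_exp n r N : (r + n < N)%N ->
  'X^n * Phi r = \sum_(s < N) (W n r s)^* *: Phi s.
Proof.
elim: n r => [|n IH] r hr.
  rewrite expr0 mul1r addn0 in hr *.
  rewrite (bigD1 (Ordinal hr)) //= eqxx (conjC_nat _ 1) scale1r big1 ?addr0 //.
  move=> s hs.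
  have -> : (r == s) = false.
    by apply/negbTE; apply: contra hs => /eqP h; apply/eqP/val_inj.
  by rewrite conjC0 scale0r.
rewrite exprS -mulrA mulrCA XPhi_exp mulr_sumr.
have step : forall t : 'I_r.+2, 'X^n * ((step_wt alpha r t)^* *: Phi t) =
    \sum_(s < N) ((step_wt alpha r t)^* * (W n t s)^*) *: Phi s.
  move=> t; rewrite -scalerAr (IH t); last first.
    by have := ltn_ord t; lia.
  by rewrite scaler_sumr; apply: eq_bigr => s _; rewrite scalerA.
rewrite (eq_bigr _ (fun t _ => step t)) exchange_big /=.
apply: eq_bigr => s _; rewrite -scaler_suml rmorph_sum; congr (_ *: _).
by apply: eq_bigr => t _; rewrite rmorphM.
Qed.
End Poly.
Section Norm.
Variable R : realType.
Local Notation C := (R[i]).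
Variable alpha : nat -> C.
Variable c : int -> C.
Local Notation Phi := (Phi alpha).

Lemma ip_shift (f g : {poly C}) : ip c ('X * f) ('X * g) = ip c f g.
Proof.
set N := maxn (size f) (size g).
have hf : (size f <= N)%N by rewrite leq_max leqnn.
have hg : (size g <= N)%N by rewrite !leq_max leqnn orbT.
rewrite (@ip_N _ c N.+1) ?size_XM // (@ip_N _ c N) // /ipN.
rewrite big_ord_recl big1 ?add0r; last by move=> j _; rewrite coefXM eqxx !mul0r.
apply: eq_bigr => i _; rewrite big_ord_recl coefXM /= coefXM eqxx conjC0 mulr0 mul0r add0r.
apply: eq_bigr => j _; rewrite coefXM /= /bump !add0n !add1n.
have -> : ((i.+1)%:Z - (j.+1)%:Z = i%:Z - j%:Z)%R.
  by rewrite !intS opprD addrACA subrr add0r.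
by [].
Qed.

Lemma int_aux (n i j : nat) : (i <= n)%N -> (j <= n)%N ->
  ((n - i)%N%:Z - (n - j)%N%:Z = j%:Z - i%:Z)%R.
Proof. by move=> hi hj; rewrite -!subzn // opprB addrC addrA subrK. Qed.

Lemma ip_star n (f g : {poly C}) : (size f <= n.+1)%N -> (size g <= n.+1)%N ->
  ip c (rev_star n f) (rev_star n g) = ip c g f.
Proof.
move=> hf hg; rewrite (@ip_N _ c n.+1) ?size_rs // (@ip_N _ c n.+1) // /ipN.
rewrite exchange_big (reindex_inj rev_ord_inj) /=; apply: eq_bigr => j _.
rewrite (reindex_inj rev_ord_inj) /=; apply: eq_bigr => i _.
have hi := ltn_ord i; have hj := ltn_ord j.
rewrite !subSS /rev_star !coef_poly.
have e1 : (n - i < n.+1)%N := leq_ltn_trans (leq_subr _ _) (ltnSn n).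
have e2 : (n - j < n.+1)%N := leq_ltn_trans (leq_subr _ _) (ltnSn n).
have hi' : (i <= n)%N by rewrite -ltnS.
have hj' : (j <= n)%N by rewrite -ltnS.
rewrite e1 e2 !subKn // conjCK int_aux //.
by rewrite [_^* * _]mulrC.
Qed.

Hypothesis hLorth : forall m n : nat, m <> n -> ip c (Phi m) (Phi n) = 0.

Lemma ip_orth_r m N (b : nat -> C) : (m < N)%N ->
  ip c (Phi m) (\sum_(t < N) b t *: Phi t) = (b m)^* * ip c (Phi m) (Phi m).
Proof.
move=> hm; rewrite ip_sumr (bigD1 (Ordinal hm)) //= ipZr big1 ?addr0 //.
move=> t ht; rewrite ipZr hLorth ?mulr0 //.
by move=> h; move/eqP: ht; apply; apply: val_inj.
Qed.

Lemma ip_orth_r0 m N (b : nat -> C) : (N <= m)%N ->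
  ip c (Phi m) (\sum_(t < N) b t *: Phi t) = 0.
Proof.
move=> hm; rewrite ip_sumr big1 // => t _; rewrite ipZr hLorth ?mulr0 //.
by move=> h; have := ltn_ord t; lia.
Qed.

Lemma ip_orth_l0 m N (b : nat -> C) : (N <= m)%N ->
  ip c (\sum_(t < N) b t *: Phi t) (Phi m) = 0.
Proof.
move=> hm; rewrite ip_suml big1 // => t _; rewrite ipZl hLorth ?mulr0 //.
by move=> h; have := ltn_ord t; lia.
Qed.

Hypothesis hL1 : c 0 = 1.

Lemma kappa n : ip c (Phi n) (Phi n) = \prod_(j < n) (1 - `|alpha j| ^+ 2).
Proof.
elim: n => [|n IH].
  rewrite big_ord0 /= /ip size_poly1 !big_ord1 /= coef1 /= (conjC_nat _ 1) !mul1r.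
  by rewrite subrr hL1.
set a := alpha n.
have S1 : ip c (Phi n.+1) (rev_star n (Phi n)) = 0.
  by rewrite Phistar_exp ip_orth_r0.
have S2 : ip c (rev_star n (Phi n)) (Phi n.+1) = 0.
  by rewrite Phistar_exp ip_orth_l0.
have S3 : ip c (rev_star n (Phi n)) (rev_star n (Phi n)) = ip c (Phi n) (Phi n).
  by rewrite ip_star ?size_Phi.
have S4 : ip c (rev_star n (Phi n)) ('X * Phi n) = a * ip c (Phi n) (Phi n).
  by rewrite XPhi_rec ipDr ipZr conjCK S2 S3 add0r.
have S5 : ip c (Phi n.+1) ('X * Phi n) = ip c (Phi n) (Phi n) - a^* * (a * ip c (Phi n) (Phi n)).
  by rewrite {1}PhiS ipNl ipZl ip_shift S4.
rewrite {2}PhiS ipNr ipZr conjCK S1 mulr0 subr0 S5 big_ord_recr /= -IH normCK.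
rewrite -/a; ring.
Qed.

End Norm.
Section Comb.
Variable R : realType.
Local Notation C := (R[i]).
Variable alpha : nat -> C.

Definition lukB (n B r s : nat) (h : {ffun 'I_n.+1 -> 'I_B.+1}) : bool :=
  [&& (h ord0 : nat) == r, (h ord_max : nat) == s &
      [forall i : 'I_n, ((h (lift ord0 i) : nat) <= (h (widen_ord (leqnSn n) i)).+1)%N]].

Definition wtB (n B : nat) (h : {ffun 'I_n.+1 -> 'I_B.+1}) : C :=
  \prod_(i < n) step_wt alpha (h (widen_ord (leqnSn n) i)) (h (lift ord0 i)).

Definition fcons (T : finType) n (x : T) (g : {ffun 'I_n.+1 -> T}) : {ffun 'I_n.+2 -> T} :=
  [ffun i => if unlift ord0 i is Some j then g j else x].

Definition ftail (T : finType) n (h : {ffun 'I_n.+2 -> T}) : {ffun 'I_n.+1 -> T} :=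
  [ffun j => h (lift ord0 j)].

Lemma fcons0 (T : finType) n (x : T) g : @fcons T n x g ord0 = x.
Proof. by rewrite ffunE unlift_none. Qed.

Lemma fconsS (T : finType) n (x : T) g j : @fcons T n x g (lift ord0 j) = g j.
Proof. by rewrite ffunE liftK. Qed.

Lemma fcons_bij (T : finType) n :
  bijective (fun p : T * {ffun 'I_n.+1 -> T} => fcons p.1 p.2).
Proof.
exists (fun h : {ffun 'I_n.+2 -> T} => (h ord0, ftail h)).
  move=> [x g] /=; rewrite fcons0; congr (_, _).
  by apply/ffunP => j; rewrite ffunE fconsS.
move=> h; apply/ffunP => i; rewrite ffunE /=.
by case: (unliftP ord0 i) => [j ->|->]; rewrite ?ffunE.
Qed.

Lemma forall_ordS n (P : pred 'I_n.+1) :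
  [forall i, P i] = P ord0 && [forall j : 'I_n, P (lift ord0 j)].
Proof.
apply/forallP/andP => [h|[h0 /forallP hS] i]; first by split => //; apply/forallP.
by case: (unliftP ord0 i) => [j ->|->].
Qed.

Lemma widen_lift n (j : 'I_n) :
  widen_ord (leqnSn n.+1) (lift ord0 j) = lift ord0 (widen_ord (leqnSn n) j).
Proof. exact: val_inj. Qed.

Lemma widen0 n : widen_ord (leqnSn n.+1) (@ord0 n) = ord0.
Proof. exact: val_inj. Qed.

Lemma ordmaxS n : (@ord_max n.+1) = lift ord0 (@ord_max n).
Proof. exact: val_inj. Qed.

Lemma lukB_fcons n B r s x g :
  @lukB n.+1 B r s (fcons x g) =
  [&& (x : nat) == r, ((g ord0 : nat) <= x.+1)%N & lukB (g ord0) s g].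
Proof.
rewrite /lukB fcons0 ordmaxS fconsS forall_ordS widen0 fcons0 fconsS.
rewrite eqxx /=.
have -> : [forall j : 'I_n, ((fcons x g (lift ord0 (lift ord0 j)) : nat) <=
             (fcons x g (widen_ord (leqnSn n.+1) (lift ord0 j))).+1)%N] =
          [forall j : 'I_n, ((g (lift ord0 j) : nat) <= (g (widen_ord (leqnSn n) j)).+1)%N].
  by apply: eq_forallb => j; rewrite widen_lift !fconsS.
by case: (_ == r); case: (_ <= _)%N; case: (_ == s).
Qed.

Lemma wtB_fcons n B (x : 'I_B.+1) g :
  @wtB n.+1 B (fcons x g) = step_wt alpha x (g ord0) * wtB g.
Proof.
rewrite /wtB big_ord_recl widen0 fcons0 fconsS; congr (_ * _).
by apply: eq_bigr => j _; rewrite widen_lift !fconsS.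
Qed.

Lemma G_W n B r s : (r + n <= B)%N ->
  \sum_(h : {ffun 'I_n.+1 -> 'I_B.+1} | lukB r s h) wtB h = W alpha n r s.
Proof.
elim: n r => [|n IH] r hr.
  rewrite addn0 in hr.
  have hrB : (r < B.+1)%N by rewrite ltnS.
  rewrite (reindex (fun x : 'I_B.+1 => [ffun _ : 'I_1 => x])) /=; last first.
    apply: onW_bij; exists (fun h : {ffun 'I_1 -> 'I_B.+1} => h ord0).
      by move=> x; rewrite ffunE.
    by move=> h /=; apply/ffunP => i; rewrite ffunE (ord1 i).
  rewrite (eq_bigl (fun x : 'I_B.+1 => (x == Ordinal hrB) && (r == s))); last first.
    move=> x; rewrite /lukB !ffunE.
    have -> : [forall i : 'I_0, (([ffun=> x] : {ffun 'I_1 -> 'I_B.+1}) (lift ord0 i) <=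
       (([ffun=> x] : {ffun 'I_1 -> 'I_B.+1}) (widen_ord (leqnSn 0) i)).+1)%N] = true.
      by apply/forallP => -[m hm]; exfalso; rewrite ltn0 in hm.
    rewrite andbT.
    case: (x =P Ordinal hrB) => [->|hx] /=; first by rewrite eqxx.
    by case: eqP => // hxr; case: hx; apply: val_inj.
  case: (r =P s) => [e|hrs].
    rewrite (eq_bigl (pred1 (Ordinal hrB))); last by move=> x; rewrite andbT.
    by rewrite big_pred1_eq /wtB big_ord0.
  by rewrite big_pred0 //; move=> x; rewrite andbF.
rewrite (reindex (fun p : 'I_B.+1 * {ffun 'I_n.+1 -> 'I_B.+1} => fcons p.1 p.2)) /=;
  last by apply: onW_bij; exact: fcons_bij.
have hrB : (r < B.+1)%N by lia.
rewrite (eq_bigl (fun p : 'I_B.+1 * {ffun 'I_n.+1 -> 'I_B.+1} =>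
   (p.1 == Ordinal hrB) && (((p.2 ord0 : nat) <= r.+1)%N && lukB (p.2 ord0) s p.2))); last first.
  move=> [x g] /=; rewrite lukB_fcons.
  case: (x =P Ordinal hrB) => [->|hx] /=; first by rewrite eqxx.
  by case: eqP => // hxr; case: hx; apply: val_inj.
rewrite -(pair_big_dep (fun x : 'I_B.+1 => x == Ordinal hrB)
   (fun (x : 'I_B.+1) (g : {ffun 'I_n.+1 -> 'I_B.+1}) => ((g ord0 : nat) <= r.+1)%N && lukB (g ord0) s g)
   (fun x g => wtB (fcons x g))) /=.
rewrite big_pred1_eq.
under eq_bigr => g _ do rewrite wtB_fcons.
rewrite (partition_big (fun g : {ffun 'I_n.+1 -> 'I_B.+1} => g ord0)
           (fun t : 'I_B.+1 => ((t : nat) <= r.+1)%N)) /=; last by move=> g /andP[].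
rewrite /= (big_ord_widen B.+1 (fun t => step_wt alpha r t * W alpha n t s)); last by lia.
apply: eq_bigr => t ht.
rewrite -IH; last by lia.
rewrite mulr_sumr; apply: eq_big => g.
  apply/idP/idP.
    by move=> /andP[/andP[_ h] /eqP e]; move: h; rewrite e.
  move=> h; have e : g ord0 = t.
    by apply: val_inj; move: h => /andP[/eqP].
  by rewrite e ht /= eqxx andbT.
by move=> /andP[_ /eqP ->].
Qed.
End Comb.

Theorem theorem3p4 (R : realType) (alpha : nat -> R[i])
  (halpha : forall k, `|alpha k| < 1)
  (c : int -> R[i])
  (hL1 : c 0 = 1)
  (hLorth : forall m n : nat, m <> n -> ip c (Phi alpha m) (Phi alpha n) = 0)
  (n r s : nat) :
  mu alpha c n r s =
  \sum_(h : {ffun 'I_n.+1 -> 'I_(r + n).+1} | is_luk s h) wt_L alpha h.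
Proof.
have hN : (r + n < (r + n + s).+1)%N by rewrite ltnS leq_addr.
have hs : (s < (r + n + s).+1)%N by rewrite ltnS leq_addl.
have hk : ip c (Phi alpha s) (Phi alpha s) != 0.
  rewrite (kappa hLorth hL1); apply/prodf_neq0 => j _.
  apply: lt0r_neq0; rewrite subr_gt0 exprn_ilt1 ?normr_ge0 //.
rewrite /mu (XnPhi_exp alpha hN) (ip_orth_r hLorth (fun t => (W alpha n r t)^*) hs) conjCK mulfK //.
rewrite -(@G_W R alpha n (r + n) r s (leqnn _)).
by [].
Qed.
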